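(* Let $t$ be a positive integer and let $G$ be a graph on $4t-1$ vertices with $\alpha(G)=2$. If $\mathrm{cm}(G)\le t-1$, then $\omega(G)\le t-4$.
   Context: All graphs are finite and simple. $\alpha(G)$ is the independence number and $\omega(G)$ the clique number. A matching $M$ in $G$ is connected if for every two edges of $M$ there is an edge of $G$ joining an endpoint of one to an endpoint of the other; $\mathrm{cm}(G)$ is the maximum size of a connected matching in $G$. *)

(* Defs.v *)
From mathcomp Require Import all_boot all_order all_algebra.
Set Implicit Arguments. Unset Strict Implicit. Unset Printing Implicit Defensive.

Definition simple_graph (T : finType) (e : rel T) : Prop :=
  symmetric e /\ irreflexive e.

Section Graph.
Variables (T : finType) (e : rel T).

Definition is_stable (S : {set T}) : bool :=
  [forall x in S, forall y in S, ~~ e x y].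

Definition is_clique (S : {set T}) : bool :=
  [forall x in S, forall y in S, (x != y) ==> e x y].

Definition alpha : nat := \max_(S : {set T} | is_stable S) #|S|.
Definition omega : nat := \max_(S : {set T} | is_clique S) #|S|.

Definition is_edge_set (f : {set T}) : bool :=
  [exists x, exists y, (e x y) && (f == [set x; y])].

Definition is_matching (M : {set {set T}}) : bool :=
  [forall f in M, is_edge_set f] &&
  [forall f in M, forall g in M, (f != g) ==> [disjoint f & g]].

Definition is_connected_matching (M : {set {set T}}) : bool :=
  is_matching M &&
  [forall f in M, forall g in M,
     (f != g) ==> [exists x in f, exists y in g, e x y]].

Definition cm : nat := \max_(M : {set {set T}} | is_connected_matching M) #|M|.

End Graph.

(* Main.v *)
Require Import Defs.
From mathcomp Require Import all_boot all_order all_algebra zify.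
Import GRing.Theory Num.Theory.
Set Implicit Arguments.

Section Aux.
Variables (T : finType) (e : rel T).
Hypothesis esym : symmetric e.
Hypothesis eirr : irreflexive e.

Lemma clique_le (Q : {set T}) : is_clique e Q -> #|Q| <= omega e.
Proof. move=> HQ; exact: (@leq_bigmax_cond _ (fun S => is_clique e S) (fun S => #|S|) Q HQ). Qed.

Lemma exists_max_clique : exists K : {set T}, is_clique e K /\ #|K| = omega e.
Proof.
have H0 : 0 < #|[pred S : {set T} | is_clique e S]|.
  apply/card_gt0P; exists set0; rewrite inE.
  by apply/forallP => x; apply/implyP; rewrite inE.
have [K HK Heq] := eq_bigmax_cond (fun S : {set T} => #|S|) H0.
exists K; split; first by move: HK; rewrite inE.
by rewrite /omega -Heq.
Qed.

Lemma nonclique (Q : {set T}) : omega e < #|Q| ->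
  exists x y, [/\ x \in Q, y \in Q, x != y & ~~ e x y].
Proof.
move=> Hlt; case H: (is_clique e Q).
  by have := clique_le Q H; rewrite leqNgt Hlt.
move/negbT: H => /forallPn [x]; rewrite negb_imply => /andP[Hx /forallPn [y]].
rewrite negb_imply => /andP[Hy]; rewrite negb_imply => /andP[Hne He].
by exists x, y.
Qed.

Lemma cm_ge (P : {set T}) (Y : T -> T) :
  (forall v, v \in P -> e v (Y v)) ->
  (forall v v', v \in P -> v' \in P -> v != v' -> (v != Y v') && (Y v != Y v')) ->
  (forall v v', v \in P -> v' \in P -> v != v' ->
     [|| e v v', e v (Y v'), e (Y v) v' | e (Y v) (Y v')]) ->
  #|P| <= cm e.
Proof.
move=> H1 H2 H3.
pose M := [set [set v; Y v] | v in P].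
have inj : {in P &, injective (fun v => [set v; Y v])}.
  move=> v v' Hv Hv' Heq; apply/eqP; apply/negPn/negP => Hne.
  have : v \in [set v'; Y v'] by rewrite -Heq set21.
  rewrite !inE (negbTE Hne) /=.
  by have /andP[/negbTE -> _] := H2 v v' Hv Hv' Hne.
have HM : is_connected_matching e M.
  apply/andP; split; first (apply/andP; split).
  - apply/forallP => f; apply/implyP => /imsetP [v Hv ->].
    apply/existsP; exists v; apply/existsP; exists (Y v).
    by rewrite H1 // eqxx.
  - apply/forallP => f; apply/implyP => /imsetP [v Hv ->].
    apply/forallP => g; apply/implyP => /imsetP [v' Hv' ->].
    apply/implyP => Hfg.
    have Hne : v != v' by apply: contraNneq Hfg => ->.
    have /andP[a1 a2] := H2 v v' Hv Hv' Hne.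
    have /andP[a3 _] : (v' != Y v) && (Y v' != Y v) by apply: H2; rewrite // eq_sym.
    rewrite -setI_eq0; apply/eqP/setP => z; rewrite !inE.
    apply/negbTE; apply/negP => /andP[/orP[]/eqP-> /orP[]/eqP E].
    + by rewrite E eqxx in Hne.
    + by rewrite E eqxx in a1.
    + by rewrite E eqxx in a3.
    + by rewrite E eqxx in a2.
  - apply/forallP => f; apply/implyP => /imsetP [v Hv ->].
    apply/forallP => g; apply/implyP => /imsetP [v' Hv' ->].
    apply/implyP => Hfg.
    have Hne : v != v' by apply: contraNneq Hfg => ->.
    case/or4P: (H3 v v' Hv Hv' Hne) => He.
    + by apply/existsP; exists v; rewrite set21; apply/existsP; exists v'; rewrite set21.
    + by apply/existsP; exists v; rewrite set21; apply/existsP; exists (Y v'); rewrite set22.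
    + by apply/existsP; exists (Y v); rewrite set22; apply/existsP; exists v'; rewrite set21.
    + by apply/existsP; exists (Y v); rewrite set22; apply/existsP; exists (Y v'); rewrite set22.
have -> : #|P| = #|M| by rewrite card_in_imset.
exact: (@leq_bigmax_cond _ (fun M => is_connected_matching e M) (fun M => #|M|) M HM).
Qed.


Lemma esymE x y : e x y = e y x. Proof. exact: esym. Qed.

Lemma notriple (Ha : alpha e = 2) x y z : x != y -> y != z -> x != z -> [|| e x y, e y z | e x z].
Proof.
move=> nxy nyz nxz; apply/negPn/negP; rewrite !negb_or => /and3P[h1 h2 h3].
pose S := [set a in [:: x; y; z]].
have HS : is_stable e S.
  apply/forallP => a; apply/implyP; rewrite !inE => Ha'.
  apply/forallP => b; apply/implyP; rewrite !inE => Hb'.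
  move/negbTE: h1 => h1; move/negbTE: h2 => h2; move/negbTE: h3 => h3.
  case/or3P: Ha' => /eqP->; case/or3P: Hb' => /eqP->;
  by rewrite ?eirr ?h1 ?h2 ?h3 // esymE ?h1 ?h2 ?h3.
have := @leq_bigmax_cond _ (fun S => is_stable e S) (fun S => #|S|) S HS.
rewrite -/(alpha e) Ha /S cardsE.
have Hu : uniq [:: x; y; z] by rewrite /= !inE negb_or nxy nxz nyz.
by rewrite (card_uniqP Hu).
Qed.

Definition Nb v := [set z | (z != v) && ~~ e v z].

Lemma Nb_clique (Ha : alpha e = 2) v : is_clique e (Nb v).
Proof.
apply/forallP => a; apply/implyP; rewrite inE => /andP[av nva].
apply/forallP => b; apply/implyP; rewrite inE => /andP[bv nvb].
apply/implyP => nab.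
have H := notriple Ha v a b ltac:(by rewrite eq_sym) nab ltac:(by rewrite eq_sym).
by move: H; rewrite (negbTE nva) (negbTE nvb) /= orbF.
Qed.

Lemma Nb_card (Ha : alpha e = 2) v : #|Nb v| <= omega e.
Proof. exact: clique_le (Nb_clique Ha v). Qed.

Lemma notNb v z : z \notin Nb v -> z != v -> e v z.
Proof. by rewrite inE => /nandP[/negPn ->|/negPn] //. Qed.

Lemma greedy : forall n (A : {set T}) (C : T -> {set T}), #|A| = n ->
  (forall a, a \in A -> n <= #|C a|) ->
  exists p : T -> T, (forall a, a \in A -> p a \in C a) /\ {in A &, injective p}.
Proof.
elim=> [|n IH] A C hA hC.
  exists id; split => [a|a b]; by rewrite (cards0_eq hA) inE.
have [a0 Ha0] : exists a0, a0 \in A by apply/card_gt0P; rewrite hA.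
have hA' : #|A :\ a0| = n by move: hA; rewrite (cardsD1 a0) Ha0 => -[].
have [p' [Hp'1 Hp'2]] := IH (A :\ a0) C hA' (fun a Ha => ltnW (hC a (subsetP (subD1set A a0) a Ha))).
have [z Hz] : exists z, z \in C a0 :\: p' @: (A :\ a0).
  apply/card_gt0P; rewrite cardsD.
  have h1 := hC a0 Ha0.
  have h2 : #|C a0 :&: p' @: (A :\ a0)| <= n.
    apply: leq_trans (subset_leq_card (subsetIr _ _)) _.
    by rewrite -hA' leq_imset_card.
  lia.
move: Hz; rewrite inE => /andP[Hz1 Hz2].
move: Hz2 Hz1 => Hz2 Hz1.
exists (fun a => if a == a0 then z else p' a); split.
  move=> a Ha; case: eqP => [->//|/eqP na]; apply: Hp'1.
  rewrite !inE; rewrite na; exact Ha.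
move=> a b Ha Hb /=.
case: (eqVneq a a0) => [->|na]; case: (eqVneq b a0) => [->|nb] //;
  rewrite ?eqxx ?(negbTE na) ?(negbTE nb).
- move=> E; by move: Hz1; rewrite E (imset_f p') // !inE nb.
- move=> E; by move: Hz1; rewrite -E (imset_f p') // !inE na.
- by apply: Hp'2; rewrite !inE ?na ?nb.
Qed.

Lemma subset_card : forall n (A : {set T}) m, #|A| = n -> m <= n ->
  exists2 B : {set T}, B \subset A & #|B| = m.
Proof.
elim=> [|n IH] A m hA hm.
  exists set0; first exact: sub0set.
  by rewrite cards0; lia.
case: (eqVneq m n.+1) => [->|nm]; first by exists A.
have [a0 Ha0] : exists a0, a0 \in A by apply/card_gt0P; rewrite hA.
have hA' : #|A :\ a0| = n by move: hA; rewrite (cardsD1 a0) Ha0 => -[].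
have [B HB1 HB2] := IH (A :\ a0) m hA' ltac:(lia).
exists B => //; exact: subset_trans HB1 (subD1set A a0).
Qed.

Lemma four (Ha : alpha e = 2) (B : {set T}) : omega e + 3 <= #|B| ->
  exists x y y1 y2, [/\ [/\ x \in B, y \in B, y1 \in B & y2 \in B],
     [/\ e x y, ~~ e x y1 & ~~ e y y2] & uniq [:: x; y; y1; y2]].
Proof.
move=> hB.
have [p [q [Hp Hq npq epq]]] := nonclique B ltac:(lia).
have hB2 : omega e < #|B :\ p :\ q|.
  move: hB; rewrite (cardsD1 p B) Hp (cardsD1 q (B :\ p)) !inE.
  rewrite eq_sym npq Hq /=; lia.
have [r [s [Hr Hs nrs ers]]] := nonclique _ hB2.
move: Hr Hs; rewrite !inE => /and3P[rq rp Hr] /and3P[sq sp Hs].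
have := notriple Ha r p q rp npq rq.
rewrite (negbTE epq) /= => /orP[erp|erq].
- exists p, r, q, s; split => //; first by split => //; rewrite esymE.
  by rewrite /= !inE !negb_or eq_sym rp npq eq_sym sp rq nrs eq_sym sq.
- exists q, r, p, s; split => //; first by split => //; rewrite esymE // esymE.
  by rewrite /= !inE !negb_or eq_sym rq eq_sym npq eq_sym sq rp nrs eq_sym sp.
Qed.

Definition conn (Y : T -> T) v v' := [|| e v v', e v (Y v'), e (Y v) v' | e (Y v) (Y v')].

Lemma connC Y v v' : conn Y v v' -> conn Y v' v.
Proof.
case/or4P => H; apply/or4P; [constructor 1|constructor 3|constructor 2|constructor 4];
by rewrite esymE.
Qed.

Lemma cm_ge2 (P : {set T}) (Y : T -> T) :
  (forall v, v \in P -> e v (Y v)) ->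
  (forall v, v \in P -> Y v \notin P) ->
  {in P &, injective Y} ->
  (forall v v', v \in P -> v' \in P -> v != v' -> conn Y v v' || conn Y v' v) ->
  #|P| <= cm e.
Proof.
move=> H1 H2 H3 H4; apply: (@cm_ge P Y) => //.
- move=> v v' Hv Hv' nvv'; apply/andP; split.
    by apply: contraNneq (H2 _ Hv') => <-.
  by apply: contraNneq nvv' => E; apply/eqP; exact: H3 E.
- move=> v v' Hv Hv' nvv'; case/orP: (H4 v v' Hv Hv' nvv') => //.
  exact: connC.
Qed.
End Aux.
Arguments exists_max_clique {T}. Arguments Nb {T}. Arguments conn {T}.
Arguments cm_ge2 {T e}. Arguments greedy {T}. Arguments subset_card {T}.
Arguments four {T e}. Arguments notriple {T e}. Arguments Nb_card {T e}.
Arguments nonclique {T e}. Arguments notNb {T e}. Arguments clique_le {T e}.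
Arguments esymE {T e}.

Lemma arith1 t k : t < k + 4 -> t - 3 <= k. Proof. lia. Qed.

Lemma arith2 t : t <= t - 3 + 3 - 0. Proof. lia. Qed.

Lemma main_nat (T : finType) (e : rel T) (t : nat) :
  simple_graph e -> 0 < t -> #|T| = 4 * t - 1 ->
  alpha e = 2 -> cm e <= t - 1 -> omega e + 4 <= t.
Proof.
move=> [esym eirr] t0 hT Ha hcm.
rewrite leqNgt; apply/negP => hlt.
have [K [HK hK]] := exists_max_clique e.
set k := omega e in hlt hK.
have Kcl : forall a b, a \in K -> b \in K -> a != b -> e a b.
  move=> a b Ha' Hb nab.
  by move/forallP: HK => /(_ a); rewrite Ha' => /forallP /(_ b); rewrite Hb nab.
have NbK : forall a z, a \in K -> z \in Nb e a -> z \notin K.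
  move=> a z Ha' ; rewrite inE => /andP[za nza]; apply/negP => Hz.
  by move: nza; rewrite Kcl // eq_sym.
have Nbk : forall a, #|Nb e a| <= k := Nb_card esym eirr Ha.
suff : exists (P : {set T}) (Y : T -> T),
  [/\ (forall v, v \in P -> e v (Y v)),
      (forall v, v \in P -> Y v \notin P),
      {in P &, injective Y},
      (forall v v', v \in P -> v' \in P -> v != v' -> conn e Y v v' || conn e Y v' v)
    & t <= #|P|].
  move=> [P [Y [H1 H2 H3 H4 H5]]].
  have := cm_ge2 esym P Y H1 H2 H3 H4; lia.
case: (leqP t k) => htk.
-
  have [K' sK' hK'] := subset_card _ _ _ hK htk.
  pose C a := ~: (Nb e a :|: K').
  have hC : forall a, a \in K' -> t <= #|C a|.
    move=> a Ha'.
    have aK : a \in K by exact: (subsetP sK').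
    have c1 := cardsC (Nb e a :|: K').
    have c2 : #|Nb e a :|: K'| <= #|Nb e a| + #|K'|.
      by rewrite cardsU leq_subr.
    have c3 : #|Nb e a :|: K'| <= #|~: (K :\: K')|.
      apply: subset_leq_card; apply/subsetP => z.
      rewrite in_setC in_setD negb_and negbK in_setU => /orP[Hz|->]; last by [].
      by rewrite (negbTE (NbK a z aK Hz)) orbT.
    have c4 := cardsC (K :\: K').
    have c5 : #|K :\: K'| = k - t by rewrite cardsD (setIidPr sK') hK hK'.
    have c6 := Nbk a.
    rewrite /C; lia.
  have [p [Hp1 Hp2]] := greedy _ _ _ hK' hC.
  exists K', p; split => //.
  + move=> v Hv; have := Hp1 v Hv; rewrite in_setC in_setU negb_or => /andP[h1 h2].
    apply: notNb h1 _; by apply: contraNneq h2 => ->.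
  + by move=> v Hv; have := Hp1 v Hv; rewrite in_setC in_setU negb_or => /andP[].
  + move=> v v' Hv Hv' nvv'; apply/orP; left; apply/orP; left.
    by apply: Kcl => //; apply: (subsetP sK').
  + by rewrite hK'.
-
  have cU : forall A B : {set T}, #|A :|: B| <= #|A| + #|B|.
    by move=> A B; rewrite cardsU leq_subr.
  have hR : k < #|~: K| by have := cardsC K; lia.
  have [u [w [Hu Hw nuw euw]]] := nonclique _ hR.
  move: Hu Hw; rewrite !inE => uK wK.
  have uNbw : u \in Nb e w by rewrite inE nuw /= esymE.
  have wNbu : w \in Nb e u by rewrite inE eq_sym nuw.
  pose B := ~: (K :|: Nb e u :|: Nb e w).
  have Bmem : forall z, z \in B -> [/\ z \notin K, e u z, e w z, z != u & z != w].
    move=> z; rewrite in_setC !in_setU !negb_or => /andP[/andP[zK zu] zw].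
    have znu : z != u by apply: contraNneq zw => ->.
    have znw : z != w by apply: contraNneq zu => ->.
    by split => //; apply: notNb.
  have hB : k + 3 <= #|B|.
    have := cardsC (K :|: Nb e u :|: Nb e w).
    have := cU (K :|: Nb e u) (Nb e w); have := cU K (Nb e u).
    have := Nbk u; have := Nbk w; rewrite -/B; lia.
  have [x [y [y1 [y2 [[xB yB y1B y2B] [exy nxy1 nyy2] uq]]]]] := four esym eirr Ha B hB.
  have [xK eux ewx xu xw] := Bmem x xB.
  have [yK euy ewy yu yw] := Bmem y yB.
  have [y1K euy1 ewy1 y1u y1w] := Bmem y1 y1B.
  have [y2K euy2 ewy2 y2u y2w] := Bmem y2 y2B.
  have nxy : x != y by apply: contraTneq uq => ->; rewrite /= !inE !eqxx.
  have nxy1' : x != y1 by apply: contraTneq uq => ->; rewrite /= !inE !eqxx ?orbT.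
  have nxy2 : x != y2 by apply: contraTneq uq => ->; rewrite /= !inE !eqxx ?orbT.
  have nyy1 : y != y1 by apply: contraTneq uq => ->; rewrite /= !inE !eqxx ?orbT ?andbF.
  have nyy2' : y != y2 by apply: contraTneq uq => ->; rewrite /= !inE !eqxx ?orbT ?andbF.
  have ny1y2 : y1 != y2 by apply: contraTneq uq => ->; rewrite /= !inE !eqxx ?orbT ?andbF.
  have [K2 sK2 hK2] := subset_card _ _ (t - 3) hK (@arith1 t k hlt).
  have K2K : forall a, a \in K2 -> a \in K by move=> a; apply: (subsetP sK2).
  pose X6 := [set z in [:: u; w; x; y; y1; y2]].
  have hX6 : #|X6| <= 6 by rewrite cardsE card_size.
  pose c1 a := ~~ e a u && ~~ e a y1.
  pose c2 a := ~~ e a w && ~~ e a y2.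
  pose c3 a := ~~ e a x && ~~ e a y.
  have neK : forall a z, a \in K -> z \notin K -> a != z.
    by move=> a z aK zK; apply: contraNneq zK => <-.
  have c12 : forall a, a \in K -> c1 a -> c2 a = false.
    move=> a aK /andP[h1 h2]; apply/negbTE/negP => /andP[h3 h4].
    have := notriple esym eirr Ha a u w (neK _ _ aK uK) nuw (neK _ _ aK wK).
    by rewrite (negbTE h1) (negbTE h3) (negbTE euw).
  have c13 : forall a, a \in K -> c1 a -> c3 a = false.
    move=> a aK /andP[h1 h2]; apply/negbTE/negP => /andP[h3 h4].
    have := notriple esym eirr Ha a x y1 (neK _ _ aK xK) nxy1' (neK _ _ aK y1K).
    by rewrite (negbTE h2) (negbTE h3) (negbTE nxy1).
  have c23 : forall a, a \in K -> c2 a -> c3 a = false.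
    move=> a aK /andP[h1 h2]; apply/negbTE/negP => /andP[h3 h4].
    have := notriple esym eirr Ha a y y2 (neK _ _ aK yK) nyy2' (neK _ _ aK y2K).
    by rewrite (negbTE h2) (negbTE h4) (negbTE nyy2).
  pose Excl a := if c1 a then Nb e u else if c2 a then Nb e w else if c3 a then Nb e x else set0.
  have hExcl : forall a, #|Excl a| <= k.
    by move=> a; rewrite /Excl; case: ifP => _; [|case: ifP => _; [|case: ifP => _]];
      rewrite ?cards0 ?Nbk.
  pose C a := ~: (Nb e a :|: K2 :|: X6 :|: Excl a).
  have hC : forall a, a \in K2 -> t - 3 <= #|C a|.
    move=> a Ha'; rewrite /C; have := cardsC (Nb e a :|: K2 :|: X6 :|: Excl a).
    have := cU (Nb e a :|: K2 :|: X6) (Excl a); have := cU (Nb e a :|: K2) X6.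
    have := cU (Nb e a) K2; have := Nbk a; have := hExcl a.
    move=> h1 h2 h3 h4 h5 h6; clear -h1 h2 h3 h4 h5 h6 hT htk hK2 hX6; lia.
  have [p [Hp1 Hp2]] := @greedy T (t - 3) K2 C hK2 hC.
  have pF : forall a, a \in K2 ->
      [/\ p a \notin Nb e a, p a \notin K2, p a \notin X6 & p a \notin Excl a].
    move=> a Ha'; have := Hp1 a Ha'.
    by rewrite in_setC !in_setU !negb_or => /andP[/andP[/andP[h1 h2] h3] h4].
  have notK2 : forall z, z \notin K -> z \notin K2 by move=> z; apply: contra; apply: K2K.
  pose Y v := if v == u then y1 else if v == w then y2 else if v == x then y else p v.
  have Yu : Y u = y1 by rewrite /Y eqxx.
  have Yw : Y w = y2 by rewrite /Y eq_sym (negbTE nuw) eqxx.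
  have Yx : Y x = y by rewrite /Y (negbTE xu) (negbTE xw) eqxx.
  have YK : forall a, a \in K2 -> Y a = p a.
    move=> a Ha'; have aK := K2K a Ha'.
    by rewrite /Y (negbTE (neK _ _ aK uK)) (negbTE (neK _ _ aK wK)) (negbTE (neK _ _ aK xK)).
  pose P := K2 :|: [set z in [:: u; w; x]].
  have paE : forall a, a \in K2 -> e a (p a).
    move=> a Ha'; have [h1 h2 _ _] := pF a Ha'; apply: notNb h1 _.
    by apply: contraNneq h2 => ->.
  have paX : forall a z, a \in K2 -> z \in [:: u; w; x; y; y1; y2] -> p a != z.
    move=> a z Ha' Hz; have [_ _ h3 _] := pF a Ha'.
    by apply: contraNneq h3 => ->; rewrite /X6 inE.
  have connKe : forall a l, a \in K2 -> l \in [:: u; w; x] -> conn e Y a l.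
    move=> a l Ha'; have aK := K2K a Ha'; have [_ _ _ h4] := pF a Ha'.
    rewrite /conn (YK a Ha') !inE => /or3P[/eqP->|/eqP->|/eqP->].
    + rewrite Yu; case c1a : (c1 a).
        move: h4; rewrite /Excl c1a => h4.
        by rewrite (esymE esym (p a)) (notNb _ _ h4 (paX a u Ha' ltac:(by rewrite !inE eqxx ?orbT))) !orbT.
      by move: c1a; rewrite /c1 => /negbT; rewrite negb_and !negbK => /orP[->|->]; rewrite ?orbT.
    + rewrite Yw; case c2a : (c2 a).
        move: h4; rewrite /Excl c2a.
        have -> : c1 a = false by apply/negbTE/negP => /(c12 a aK); rewrite c2a.
        move=> h4.
        by rewrite (esymE esym (p a)) (notNb _ _ h4 (paX a w Ha' ltac:(by rewrite !inE eqxx ?orbT))) !orbT.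
      by move: c2a; rewrite /c2 => /negbT; rewrite negb_and !negbK => /orP[->|->]; rewrite ?orbT.
    + rewrite Yx; case c3a : (c3 a).
        move: h4; rewrite /Excl c3a.
        have -> : c1 a = false by apply/negbTE/negP => /(c13 a aK); rewrite c3a.
        have -> : c2 a = false by apply/negbTE/negP => /(c23 a aK); rewrite c3a.
        move=> h4.
        by rewrite (esymE esym (p a)) (notNb _ _ h4 (paX a x Ha' ltac:(by rewrite !inE eqxx ?orbT))) !orbT.
      by move: c3a; rewrite /c3 => /negbT; rewrite negb_and !negbK => /orP[->|->]; rewrite ?orbT.
  have y1P : y1 \notin P.
    rewrite in_setU negb_or notK2 //= !inE !negb_or y1u y1w eq_sym nxy1' //.
  have y2P : y2 \notin P.
    rewrite in_setU negb_or notK2 //= !inE !negb_or y2u y2w eq_sym nxy2 //.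
  have yP : y \notin P.
    rewrite in_setU negb_or notK2 //= !inE !negb_or yu yw eq_sym nxy //.
  have extP : forall v, v \in [set z in [:: u; w; x]] -> [\/ v = u, v = w | v = x].
    by move=> v; rewrite !inE => /or3P[/eqP->|/eqP->|/eqP->]; [apply: Or31|apply: Or32|apply: Or33].
  exists P, Y; split.
  - move=> v /setUP[Hv|]; first by rewrite YK // paE.
    by move=> /extP[->|->|->]; rewrite ?Yu ?Yw ?Yx.
  - move=> v /setUP[Hv|]; last first.
      by move=> /extP[->|->|->]; rewrite ?Yu ?Yw ?Yx.
    have [_ h2 _ _] := pF v Hv.
    rewrite YK // in_setU negb_or h2 /= !inE !negb_or.
    by rewrite !paX // !inE eqxx ?orbT.
  - move=> v v' /setUP[Hv|Hv] /setUP[Hv'|Hv'].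
    + by rewrite !YK //; apply: Hp2.
    + rewrite YK //; move: Hv' => /extP[->|->|->];
        rewrite ?Yu ?Yw ?Yx => /eqP; apply: contraTeq => _;
        by apply: paX; rewrite // !inE eqxx ?orbT.
    + rewrite (YK v') //; move: Hv => /extP[->|->|->];
        rewrite ?Yu ?Yw ?Yx => /eqP; rewrite eq_sym; apply: contraTeq => _;
        by apply: paX; rewrite // !inE eqxx ?orbT.
    + move: Hv Hv' => /extP[->|->|->] /extP[->|->|->];
        rewrite ?Yu ?Yw ?Yx // => E;
        by move: ny1y2 nyy1 nyy2'; rewrite E eqxx.
  - have e1 : e y1 w by rewrite esymE.
    have e2 : e x u by rewrite esymE.
    have e3 : e y u by rewrite esymE.
    have e4 : e y w by rewrite esymE.
    have e5 : e x w by rewrite esymE.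
    move=> v v' /setUP[Hv|Hv] /setUP[Hv'|Hv'] nvv'.
    + by apply/orP; left; rewrite /conn (Kcl v v' (K2K _ Hv) (K2K _ Hv') nvv').
    + by apply/orP; left; apply: connKe => //; move: Hv'; rewrite inE.
    + by apply/orP; right; apply: connKe => //; move: Hv; rewrite inE.
    + move: Hv Hv' nvv' => /extP[->|->|->] /extP[->|->|->]; rewrite ?eqxx // => _;
      apply/orP; left; rewrite /conn ?Yu ?Yw ?Yx;
      by rewrite ?eux ?ewx ?ewy1 ?e1 ?e2 ?e3 ?e4 ?e5 ?orbT.
  - have hS3 : #|[set z in [:: u; w; x]]| = 3.
      rewrite cardsE; apply/card_uniqP.
      by rewrite /= !inE !negb_or nuw eq_sym xu eq_sym xw.
    have hI : #|K2 :&: [set z in [:: u; w; x]]| = 0.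
      apply/eqP; rewrite cards_eq0; apply/eqP/setP => z; rewrite [in RHS]inE.
      apply/negbTE/negP => /setIP[zK2 /extP[E|E|E]]; move: zK2; rewrite E => /K2K;
      by rewrite ?(negbTE uK) ?(negbTE wK) ?(negbTE xK).
    by rewrite /P cardsU hS3 hI hK2 arith2.
Qed.

Local Open Scope ring_scope.

Theorem corollary2p6 (T : finType) (e : rel T) (t : nat) :
  simple_graph e -> (0 < t)%N -> #|T| = (4 * t - 1)%N ->
  alpha e = 2%N -> (cm e <= t - 1)%N ->
  ((omega e)%:Z <= t%:Z - 4).
Proof.
move=> hs ht hT ha hcm.
have H := @main_nat T e t hs ht hT ha hcm.
lia.
Qed.
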